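(* For any finite quasi-discrete closure model $\mathcal{M}=((X,\mathcal{C}_R),\mathcal{V})$ and any SLCS formula $\phi$ with $\mathit{size}(\phi)=k$, the procedure $\mathtt{Sat}(\mathcal{M},\phi)$ terminates in $\mathcal{O}(k\cdot(|X|+|R|))$ steps.
   Context: For $R\subseteq X\times X$, $\mathcal{C}_R(A)=A\cup\{x\mid\exists a\in A.(a,x)\in R\}$; a finite quasi-discrete closure model is $((X,\mathcal{C}_R),\mathcal{V})$ with $X$ finite and $\mathcal{V}:AP\to 2^X$. SLCS formulas: $\Phi::=a\mid\top\mid\lnot\Phi\mid\Phi\land\Phi\mid\mathcal{N}\Phi\mid\Phi\,\mathcal{S}\,\Phi\mid\Phi\rightsquigarrow\Phi$ ($a\in AP$). Size: $\mathit{size}(\top)=\mathit{size}(a)=1$; $\mathit{size}(\lnot\phi)=\mathit{size}(\mathcal{N}\phi)=1+\mathit{size}(\phi)$; $\mathit{size}(\phi_1\land\phi_2)=\mathit{size}(\phi_1\,\mathcal{S}\,\phi_2)=\mathit{size}(\phi_1\rightsquigarrow\phi_2)=1+\mathit{size}(\phi_1)+\mathit{size}(\phi_2)$. Let $\mathit{pre}(x)=\{y\mid(y,x)\in R\}$ and $\mathit{post}(x)=\{y\mid(x,y)\in R\}$. The procedure $\mathtt{Sat}(\mathcal{M},\phi)$ is defined recursively: $\top\mapsto X$; $a\mapsto\mathcal{V}(a)$; $\lnot\phi_1\mapsto X\setminus\mathtt{Sat}(\mathcal{M},\phi_1)$; $\phi_1\land\phi_2\mapsto\mathtt{Sat}(\mathcal{M},\phi_1)\cap\mathtt{Sat}(\mathcal{M},\phi_2)$;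 $\mathcal{N}\phi_1\mapsto\mathcal{C}_R(\mathtt{Sat}(\mathcal{M},\phi_1))$. For $\phi_1\,\mathcal{S}\,\phi_2$: set $V:=\mathtt{Sat}(\mathcal{M},\phi_1)$, $Q:=\mathtt{Sat}(\mathcal{M},\phi_2)$, $T:=\mathcal{C}_R(V\cup Q)\setminus(V\cup Q)$; while $T\neq\emptyset$: set $T':=\emptyset$, and for each $x\in T$ let $N:=\mathit{pre}(x)\cap V$, set $V:=V\setminus N$ and $T':=T'\cup(N\setminus Q)$; then $T:=T'$; finally return $V$. For $\phi_1\rightsquigarrow\phi_2$: set $V:=\mathtt{Sat}(\mathcal{M},\phi_1)$, $Q:=\mathtt{Sat}(\mathcal{M},\phi_2)$, $T:=\mathcal{C}_R(V)\cap Q$, $S:=T$, $Q:=Q\setminus T$; while $T\neq\emptyset$: set $T':=\emptyset$, for each $x\in T$ set $T':=T'\cup(Q\cap\mathit{post}(x))$; then $Q:=Q\setminus T'$, $S:=S\cup T'$, $T:=T'$; finally return $S$. *)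

(* Defs.v *)
From mathcomp Require Import all_boot.

Set Implicit Arguments.
Unset Strict Implicit.
Unset Printing Implicit Defensive.

Inductive formula (AP : Type) : Type :=
| FAtom of AP
| FTop
| FNot of formula AP
| FAnd of formula AP & formula AP
| FNear of formula AP
| FSurr of formula AP & formula AP
| FReach of formula AP & formula AP.
Arguments FTop {AP}.

Fixpoint fsize (AP : Type) (f : formula AP) : nat :=
  match f with
  | FAtom _ | FTop => 1
  | FNot g | FNear g => (fsize g).+1
  | FAnd g h | FSurr g h | FReach g h => (fsize g + fsize h).+1
  end.

Section Model.
(* A finite quasi-discrete closure model ((X, C_R), V): X finite, R a binary
   relation on X (given as a boolean relation), V a valuation. *)
Variables (X : finType) (R : rel X).

(* R as a set of pairs, so that |R| = #|edges R|. *)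
Definition edges : {set X * X} := [set p | R p.1 p.2].
Definition pre (x : X) : {set X} := [set y | R y x].
Definition post (x : X) : {set X} := [set y | R x y].
Definition closR (A : {set X}) : {set X} := A :|: [set x | [exists a in A, R a x]].

(* Cost model: a whole-set operation (copy, complement, intersection, union,
   difference of subsets of X, represented as bit vectors) costs |X|+1;
   computing C_R(A) costs |X|+|R|+1 (adjacency lists); inside the loops,
   pre(x)/post(x) are scanned in |pre x|+1 / |post x|+1 steps and updates of
   V, T', Q, S by a set N cost |N| (element-wise insertion/removal); each loop
   test, T' := ∅ and T := T' costs 1. *)
Definition setop_cost : nat := #|X|.+1.
Definition clos_cost : nat := #|X| + #|edges| + 1.

(* "for each x in T" loop of the surround case, with T enumerated by s.
   Returns (V, T', cost). *)
Fixpoint surr_for (Q V T' : {set X}) (s : seq X) : {set X} * {set X} * nat :=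
  match s with
  | [::] => (V, T', 0)
  | x :: s' =>
      let N := pre x :&: V in
      let: (V2, T2, c) := surr_for Q (V :\: N) (T' :|: (N :\: Q)) s' in
      (V2, T2, c + (#|pre x| + #|N| + #|N| + 1))
  end.

(* while T ≠ ∅ loop of the surround case: surr_loop Q V T Vf n means that the
   loop started in state (V, T) terminates with V = Vf after n steps, for some
   choice of the order in which each T is enumerated. *)
Inductive surr_loop (Q : {set X}) : {set X} -> {set X} -> {set X} -> nat -> Prop :=
| surr_loop_stop V : surr_loop Q V set0 V 1
| surr_loop_step V T s V1 T1 c Vf n :
    T != set0 -> perm_eq s (enum T) ->
    surr_for Q V set0 s = (V1, T1, c) ->
    surr_loop Q V1 T1 Vf n ->
    surr_loop Q V T Vf (c + 3 + n).

(* "for each x in T" loop of the reach case. Returns (T', cost). *)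
Fixpoint reach_for (Q T' : {set X}) (s : seq X) : {set X} * nat :=
  match s with
  | [::] => (T', 0)
  | x :: s' =>
      let P := Q :&: post x in
      let: (T2, c) := reach_for Q (T' :|: P) s' in
      (T2, c + (#|post x| + #|P| + 1))
  end.

(* while T ≠ ∅ loop of the reach case, state (Q, T, S). *)
Inductive reach_loop : {set X} -> {set X} -> {set X} -> {set X} -> nat -> Prop :=
| reach_loop_stop Q S : reach_loop Q set0 S S 1
| reach_loop_step Q T S s T1 c Sf n :
    T != set0 -> perm_eq s (enum T) ->
    reach_for Q set0 s = (T1, c) ->
    reach_loop (Q :\: T1) T1 (S :|: T1) Sf n ->
    reach_loop Q T S Sf (c + (#|T1| + #|T1|) + 4 + n).

(* Sat Val phi S n : the procedure Sat(M, phi) terminates returning S after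
   n steps. *)
Inductive Sat (AP : Type) (Val : AP -> {set X}) : formula AP -> {set X} -> nat -> Prop :=
| Sat_top : Sat Val FTop setT setop_cost
| Sat_atom a : Sat Val (FAtom a) (Val a) setop_cost
| Sat_not f S n : Sat Val f S n -> Sat Val (FNot f) (~: S) (n + setop_cost)
| Sat_and f1 f2 S1 S2 n1 n2 :
    Sat Val f1 S1 n1 -> Sat Val f2 S2 n2 ->
    Sat Val (FAnd f1 f2) (S1 :&: S2) (n1 + n2 + setop_cost)
| Sat_near f S n : Sat Val f S n -> Sat Val (FNear f) (closR S) (n + clos_cost)
| Sat_surr f1 f2 V Q n1 n2 Vf m :
    Sat Val f1 V n1 -> Sat Val f2 Q n2 ->
    surr_loop Q V (closR (V :|: Q) :\: (V :|: Q)) Vf m ->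
    Sat Val (FSurr f1 f2) Vf (n1 + n2 + clos_cost + setop_cost + setop_cost + m)
| Sat_reach f1 f2 V Q n1 n2 Sf m :
    Sat Val f1 V n1 -> Sat Val f2 Q n2 ->
    reach_loop (Q :\: (closR V :&: Q)) (closR V :&: Q) (closR V :&: Q) Sf m ->
    Sat Val (FReach f1 f2) Sf
        (n1 + n2 + clos_cost + setop_cost + setop_cost + setop_cost + m).

End Model.

(* Main.v *)
Require Import Defs.
From mathcomp Require Import all_boot.
From mathcomp Require Import zify.

Set Implicit Arguments.
Unset Strict Implicit.
Unset Printing Implicit Defensive.

Section Aux.
Variables (X : finType) (R : rel X).

Lemma sum_sub (f : X -> nat) (A B : {set X}) :
  A \subset B -> \sum_(x in A) f x <= \sum_(x in B) f x.
Proof. move=> sAB; rewrite (@big_setID _ _ _ _ B A) /= (setIidPr sAB). exact: leq_addr. Qed.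

Lemma sum_disj (f : X -> nat) (A B C : {set X}) :
  [disjoint A & B] -> A :|: B \subset C ->
  \sum_(x in A) f x + \sum_(x in B) f x <= \sum_(x in C) f x.
Proof.
move=> dAB sC; apply: leq_trans (sum_sub f sC).
rewrite (@big_setID _ _ _ _ (A :|: B) A) /= (setIidPr (subsetUl A B)).
rewrite setDUl setDv set0U.
by rewrite (setDidPl _) // disjoint_sym.
Qed.

Lemma card_disj (A B C : {set X}) :
  [disjoint A & B] -> A :|: B \subset C -> #|A| + #|B| <= #|C|.
Proof. move=> d s; rewrite -!sum1_card; exact: sum_disj. Qed.

Lemma card_split (A B : {set X}) : A \subset B -> #|B| = #|A| + #|B :\: A|.
Proof. by move=> sAB; rewrite -(cardsID A B) (setIidPr sAB). Qed.

Lemma sum_split (f : X -> nat) (A B : {set X}) : A \subset B ->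
  \sum_(x in B) f x = \sum_(x in A) f x + \sum_(x in B :\: A) f x.
Proof. by move=> sAB; rewrite (@big_setID _ _ _ _ B A) /= (setIidPr sAB). Qed.

Lemma sum_enum (f : X -> nat) (T : {set X}) s : perm_eq s (enum T) ->
  \sum_(x <- s) (f x + 1) = \sum_(x in T) f x + #|T|.
Proof.
move=> ps; rewrite (perm_big _ ps) big_enum /= big_split /= sum1_card //.
Qed.

Lemma sum_pre : \sum_(x in [set: X]) #|pre R x| = #|edges R|.
Proof.
rewrite /edges /pre.
transitivity (\sum_(x : X) \sum_(y : X) (R y x : nat)).
  apply: eq_big => [x|x _]; first by rewrite inE.
  by rewrite -sum1dep_card big_mkcond.
rewrite exchange_big /= -sum1dep_card.
rewrite (eq_bigr (fun y => \sum_(x | R y x) 1)); last first.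
  by move=> y _; rewrite [RHS]big_mkcond; apply: eq_bigr => i _; case: (R y i).
rewrite pair_big_dep /=; apply: eq_bigl => p; done.
Qed.

Lemma sum_post : \sum_(x in [set: X]) #|post R x| = #|edges R|.
Proof.
rewrite /edges /post.
transitivity (\sum_(x : X) \sum_(y | R x y) 1).
  apply: eq_big => [x|x _]; first by rewrite inE.
  by rewrite -sum1dep_card.
rewrite pair_big_dep /= -sum1dep_card; done.
Qed.


Lemma surr_for_spec Q V T' s V1 T1 c : surr_for R Q V T' s = (V1, T1, c) ->
  [/\ V1 \subset V, T1 \subset T' :|: (V :\: V1) &
      c + 2 * #|V1| <= \sum_(x <- s) (#|pre R x| + 1) + 2 * #|V|].
Proof.
elim: s V T' V1 T1 c => [|x s IH] V T' V1 T1 c /=.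
  by case=> <- <- <-; rewrite setDv setU0 big_nil; split => //; apply: subsetUl.
set N := pre R x :&: V.
case E: (surr_for R Q (V :\: N) (T' :|: (N :\: Q)) s) => [[V2 T2] c2].
case=> <- <- <-.
have [sV2 sT2 hc2] := IH _ _ _ _ _ E.
have sNV : N \subset V by apply: subsetIr.
have hV := card_split sNV.
have hcard : #|V :\: N| + #|N| = #|V| by rewrite hV addnC.
split.
- apply: subset_trans sV2 _; exact: subsetDl.
- apply: subset_trans sT2 _; apply/subsetP => y; move: (subsetP sV2 y).
  rewrite /N /pre !inE.
  by case: (y \in T'); case: (y \in Q); case: (y \in V2); case: (y \in V); case: (R y x).
- rewrite big_cons; lia.
Qed.

Definition Phi (V T : {set X}) :=
  \sum_(x in T) #|pre R x| + 4 * #|T| + \sum_(x in V) #|pre R x| + 6 * #|V|.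

Lemma surr_loop_bound Q V T Vf n : surr_loop R Q V T Vf n ->
  [disjoint T & V] -> n <= Phi V T + 1.
Proof.
elim=> {V T Vf n} [V|V T s V1 T1 c Vf n nT ps E _ IH] d.
  by rewrite addn1.
have [sV1 sT1 hc] := surr_for_spec E.
rewrite set0U in sT1.
have d1 : [disjoint T1 & V1].
  rewrite -setI_eq0; apply/eqP/setP => y; rewrite !inE.
  apply/negP => /andP[yT yV]; have := subsetP sT1 y yT; by rewrite !inE yV.
have := IH d1; rewrite /Phi => hn.
have hs := sum_enum (fun x => #|pre R x|) ps.
have sU : T1 :|: V1 \subset V.
  by rewrite subUset sV1 andbT; apply: subset_trans sT1 (subsetDl _ _).
have h1 := sum_disj (fun x => #|pre R x|) d1 sU.
have h2 := card_disj d1 sU.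
have hT : 0 < #|T| by rewrite card_gt0.
set k := \sum_(x in T) #|pre R x| in hs *. set t := #|T| in hs hT *. set a := \sum_(x <- s) _ in hc hs. set pv := \sum_(x in V) #|pre R x| in h1 *. set v := #|V| in hc h2 *. set v1 := #|V1| in hc hn h2. set t1 := #|T1| in hn h2. set p1 := \sum_(x in T1) #|pre R x| in hn h1. set p2 := \sum_(x in V1) #|pre R x| in hn h1. lia.
Qed.

Lemma reach_for_spec Q T' s T1 c : reach_for R Q T' s = (T1, c) ->
  T1 \subset T' :|: Q /\ c <= \sum_(x <- s) (2 * #|post R x| + 1).
Proof.
elim: s T' T1 c => [|x s IH] T' T1 c /=.
  by case=> <- <-; split; [apply: subsetUl | rewrite big_nil].
case E: (reach_for R Q (T' :|: (Q :&: post R x)) s) => [T2 c2].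
case=> <- <-.
have [sT2 hc2] := IH _ _ _ E.
have hP : #|Q :&: post R x| <= #|post R x| by apply: subset_leq_card; apply: subsetIr.
split.
- apply: subset_trans sT2 _; apply/subsetP => y; rewrite !inE.
  by case: (y \in T'); case: (y \in Q).
- rewrite big_cons; lia.
Qed.

Definition Psi (Q T : {set X}) :=
  2 * \sum_(x in T) #|post R x| + 5 * #|T| + 2 * \sum_(x in Q) #|post R x| + 7 * #|Q|.

Lemma reach_loop_bound Q T S Sf n : reach_loop R Q T S Sf n ->
  [disjoint T & Q] -> n <= Psi Q T + 1.
Proof.
elim=> {Q T S Sf n} [Q S|Q T S s T1 c Sf n nT ps E _ IH] d.
  by rewrite addn1.
have [sT1 hc] := reach_for_spec E.
rewrite set0U in sT1.
have d1 : [disjoint T1 & Q :\: T1].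
  rewrite -setI_eq0; apply/eqP/setP => y; rewrite !inE.
  by case: (y \in T1).
have := IH d1; rewrite /Psi => hn.
have hs : \sum_(x <- s) (2 * #|post R x| + 1) =
          2 * \sum_(x in T) #|post R x| + #|T|.
  rewrite (sum_enum (fun x => 2 * #|post R x|) ps) big_distrr //.
have h1 := sum_split (fun x => #|post R x|) sT1.
have h2 := card_split sT1.
have hT : 0 < #|T| by rewrite card_gt0.
set k := \sum_(x in T) #|post R x| in hs *. set t := #|T| in hs hT *. set a := \sum_(x <- s) _ in hc hs. set pq := \sum_(x in Q) #|post R x| in h1 *. set q := #|Q| in h2 *. set q1 := #|Q :\: T1| in hn h2. set t1 := #|T1| in hn h2 *. set p1 := \sum_(x in T1) #|post R x| in hn h1. set p2 := \sum_(x in Q :\: T1) #|post R x| in hn h1. lia.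
Qed.


Lemma Phi_bound (V T : {set X}) : [disjoint T & V] -> Phi V T <= 6 * (#|edges R| + #|X|).
Proof.
move=> d; rewrite /Phi.
have s : T :|: V \subset [set: X] by apply: subsetT.
have h1 := sum_disj (fun x => #|pre R x|) d s.
have h2 := card_disj d s.
rewrite sum_pre cardsT /= in h1 h2.
set a := \sum_(x in T) #|pre R x| in h1 *.
set b := \sum_(x in V) #|pre R x| in h1 *.
set t := #|T| in h2 *. set v := #|V| in h2 *. set E := #|edges R| in h1 *. set x := #|X| in h2 *. lia.
Qed.

Lemma Psi_bound (Q T : {set X}) : [disjoint T & Q] -> Psi Q T <= 7 * (#|edges R| + #|X|).
Proof.
move=> d; rewrite /Psi.
have s : T :|: Q \subset [set: X] by apply: subsetT.
have h1 := sum_disj (fun x => #|post R x|) d s.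
have h2 := card_disj d s.
rewrite sum_post cardsT /= in h1 h2.
set a := \sum_(x in T) #|post R x| in h1 *.
set b := \sum_(x in Q) #|post R x| in h1 *.
set t := #|T| in h2 *. set q := #|Q| in h2 *. set E := #|edges R| in h1 *. set x := #|X| in h2 *. lia.
Qed.

Lemma surr_exists (Q V T : {set X}) : exists Vf n, surr_loop R Q V T Vf n.
Proof.
suff: forall k (V T : {set X}), #|V| < k -> exists Vf n, surr_loop R Q V T Vf n.
  by move=> /(_ #|V|.+1 V T (ltnSn _)).
elim=> [//|k IH] {}V {}T hV.
case: (eqVneq T set0) => [->|nT]; first by exists V, 1; exact: surr_loop_stop.
case E: (surr_for R Q V set0 (enum T)) => [[V1 T1] c].
have [sV1 sT1 _] := surr_for_spec E; rewrite set0U in sT1.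
have [Vf [n L]] : exists Vf n, surr_loop R Q V1 T1 Vf n.
  case: (eqVneq T1 set0) => [->|nT1]; first by exists V1, 1; exact: surr_loop_stop.
  apply: IH; have h := card_split sV1.
  have : 0 < #|V :\: V1|.
    rewrite card_gt0; apply/negP => /eqP e.
    by move: nT1; rewrite -subset0 -e sT1.
  lia.
exists Vf, (c + 3 + n); exact: surr_loop_step nT (perm_refl _) E L.
Qed.

Lemma reach_exists (Q T S : {set X}) : exists Sf n, reach_loop R Q T S Sf n.
Proof.
suff: forall k (Q T S : {set X}), #|Q| < k -> exists Sf n, reach_loop R Q T S Sf n.
  by move=> /(_ #|Q|.+1 Q T S (ltnSn _)).
elim=> [//|k IH] {}Q {}T {}S hQ.
case: (eqVneq T set0) => [->|nT]; first by exists S, 1; exact: reach_loop_stop.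
case E: (reach_for R Q set0 (enum T)) => [T1 c].
have [sT1 _] := reach_for_spec E; rewrite set0U in sT1.
have [Sf [n L]] : exists Sf n, reach_loop R (Q :\: T1) T1 (S :|: T1) Sf n.
  case: (eqVneq T1 set0) => [->|nT1].
    by exists (S :|: set0), 1; exact: reach_loop_stop.
  apply: IH; have h := card_split sT1.
  have : 0 < #|T1| by rewrite card_gt0.
  lia.
exists Sf, (c + (#|T1| + #|T1|) + 4 + n).
exact: reach_loop_step nT (perm_refl _) E L.
Qed.

End Aux.

Theorem lemma6p2 :
  exists c : nat,
    forall (AP : Type) (X : finType) (R : rel X) (Val : AP -> {set X})
           (phi : formula AP),
      (exists (S : {set X}) (n : nat), Sat R Val phi S n) /\
      (forall (S : {set X}) (n : nat),
          Sat R Val phi S n -> n <= c * fsize phi * (#|X| + #|edges R| + 1)).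
Proof.
exists 11 => AP X R Val phi; split.
  elim: phi => [a|| f [S [n H]] | f1 [S1 [n1 H1]] f2 [S2 [n2 H2]]
              | f [S [n H]] | f1 [S1 [n1 H1]] f2 [S2 [n2 H2]]
              | f1 [S1 [n1 H1]] f2 [S2 [n2 H2]]].
  - by eexists; eexists; apply: Sat_atom.
  - by eexists; eexists; apply: Sat_top.
  - by eexists; eexists; apply: Sat_not H.
  - by eexists; eexists; apply: Sat_and H1 H2.
  - by eexists; eexists; apply: Sat_near H.
  - have [Vf [m L]] := surr_exists R S2 S1 (closR R (S1 :|: S2) :\: (S1 :|: S2)).
    by eexists; eexists; apply: Sat_surr H1 H2 L.
  - have [Sf [m L]] := reach_exists R (S2 :\: (closR R S1 :&: S2))
                         (closR R S1 :&: S2) (closR R S1 :&: S2).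
    by eexists; eexists; apply: Sat_reach H1 H2 L.
move=> S n H.
set N := #|X| + #|edges R| + 1.
have hs : setop_cost X <= N by rewrite /setop_cost /N; lia.
have hc : clos_cost R <= N by rewrite /clos_cost /N.
elim: H => {S n phi} /=.
- lia.
- lia.
- move=> f S n _ IH; nia.
- move=> f1 f2 S1 S2 n1 n2 _ IH1 _ IH2; nia.
- move=> f S n _ IH; nia.
- move=> f1 f2 V Q n1 n2 Vf m _ IH1 _ IH2 L.
  have d : [disjoint closR R (V :|: Q) :\: (V :|: Q) & V].
    rewrite -setI_eq0; apply/eqP/setP => y; rewrite !inE.
    by case: (y \in V); rewrite ?andbF.
  have hm := leq_trans (surr_loop_bound L d) (leq_add (Phi_bound R d) (leqnn 1)).
  have : 6 * (#|edges R| + #|X|) + 1 <= 6 * N by rewrite /N; lia.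
  nia.
- move=> f1 f2 V Q n1 n2 Sf m _ IH1 _ IH2 L.
  have d : [disjoint closR R V :&: Q & Q :\: (closR R V :&: Q)].
    rewrite -setI_eq0; apply/eqP/setP => y; rewrite !inE.
    by case: ((y \in V) || [exists a in V, R a y]); case: (y \in Q).
  have hm := leq_trans (reach_loop_bound L d) (leq_add (Psi_bound R d) (leqnn 1)).
  have : 7 * (#|edges R| + #|X|) + 1 <= 7 * N by rewrite /N; lia.
  nia.
Qed.
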